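(* Let $f(z)=z^3\prod_{n=1}^{\infty}(1+z/a_n)^{2p_n}$ be a transcendental entire function, where $(a_n)$ is a positive strictly increasing sequence and $p_n\in\mathbb N$. Let $g$ be the associated function defined below and let $r_0=10$, $r_{n}=g^{n}(10)$ for $n\ge1$. Suppose there exists a sequence of positive integers $(N_k)_{k\in\mathbb N}$ such that $$f^{N_1}\big((-r_2,0]\big)\subset(-r_{N_1},0]$$ and, for all $k\ge2$, $$f^{N_k}\big((-r_{N_1+\cdots+N_{k-1}+2k},0]\big)\subset(-r_{N_1+\cdots+N_k},0].$$ Then $A(f)\cap(-\infty,0]=\emptyset$.
   Context: The function $g:[0,\infty)\to[0,\infty)$ is defined by $g(r)=r^3$ for $0\le r<a_1$ and $g(r)=r^3\prod_{n:\,a_n\le r}(1+r/a_n)^{2p_n}$ for $r\ge a_1$; $g^n$ is its $n$th iterate. $f^n$ denotes the $n$th iterate of $f$, $M(r)=\max_{|z|=r}|f(z)|$ and $M^n$ its $n$th iterate. For $R>0$ with $M(r)>r$ for $r\ge R$, $A_R(f)=\{z:|f^n(z)|\ge M^n(R)\text{ for all }n\in\mathbb N\}$ and $A(f)=\bigcup_{n\in\mathbb N}f^{-n}(A_R(f))$ (independent of the choice of such $R$). *)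

(* Defs.v *)
From Stdlib Require Export Reals.
Open Scope R_scope.

Definition Cx : Type := (R * R)%type.
Definition Cre (z : Cx) : R := fst z.
Definition Cim (z : Cx) : R := snd z.
Definition RtoC (x : R) : Cx := (x, 0).
Definition C1 : Cx := (1, 0).
Definition Cadd (z w : Cx) : Cx := (fst z + fst w, snd z + snd w).
Definition Csub (z w : Cx) : Cx := (fst z - fst w, snd z - snd w).
Definition Cmul (z w : Cx) : Cx :=
  (fst z * fst w - snd z * snd w, fst z * snd w + snd z * fst w).
Definition Cdivr (z : Cx) (a : R) : Cx := (fst z / a, snd z / a).
Fixpoint Cpow (z : Cx) (k : nat) : Cx :=
  match k with O => C1 | S k => Cmul (Cpow z k) z end.
Definition Cnorm (z : Cx) : R := sqrt (fst z * fst z + snd z * snd z).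

Definition Ccv (u : nat -> Cx) (l : Cx) : Prop :=
  forall eps, 0 < eps -> exists N, forall n, (N <= n)%nat -> Cnorm (Csub (u n) l) < eps.

Fixpoint Cprod (N : nat) (F : nat -> Cx) : Cx :=
  match N with O => C1 | S N => Cmul (Cprod N F) (F N) end.
Fixpoint Rprod (N : nat) (F : nat -> R) : R :=
  match N with O => 1 | S N => Rprod N F * F N end.

Fixpoint iterf {A : Type} (n : nat) (h : A -> A) (x : A) : A :=
  match n with O => x | S n => h (iterf n h x) end.

(* partial products of f(z) = z^3 prod_{n>=1} (1 + z/a_n)^{2 p_n}
   (sequences indexed from 0: a 0 = a_1, p 0 = p_1) *)
Definition fpart (a : nat -> R) (p : nat -> nat) (N : nat) (z : Cx) : Cx :=
  Cmul (Cpow z 3) (Cprod N (fun n => Cpow (Cadd C1 (Cdivr z (a n))) (2 * p n))).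

(* partial products for g: for r >= a_1,
   g(r) = r^3 prod_{n : a_n <= r} (1 + r/a_n)^{2 p_n}; g(r) = r^3 for r < a_1 *)
Definition gpart (a : nat -> R) (p : nat -> nat) (N : nat) (r : R) : R :=
  if Rlt_dec r (a 0%nat) then r ^ 3
  else r ^ 3 * Rprod N (fun n => if Rle_dec (a n) r then (1 + r / a n) ^ (2 * p n) else 1).

Definition is_max_modulus (f : Cx -> Cx) (M : R -> R) : Prop :=
  forall r, 0 <= r ->
    (exists z, Cnorm z = r /\ Cnorm (f z) = M r) /\
    (forall z, Cnorm z = r -> Cnorm (f z) <= M r).

Definition in_AR (f : Cx -> Cx) (M : R -> R) (R0 : R) (z : Cx) : Prop :=
  forall n : nat, (1 <= n)%nat -> Cnorm (iterf n f z) >= iterf n M R0.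

Definition in_A (f : Cx -> Cx) (M : R -> R) (R0 : R) (z : Cx) : Prop :=
  exists m : nat, (1 <= m)%nat /\ in_AR f M R0 (iterf m f z).

(* N_1 + ... + N_k  (sequence N indexed from 1) *)
Fixpoint Nsum (N : nat -> nat) (k : nat) : nat :=
  match k with O => O | S k => (Nsum N k + N (S k))%nat end.

Definition maps_into (f : Cx -> Cx) (m : nat) (s t : R) : Prop :=
  forall x, -s < x <= 0 ->
    Cim (iterf m f (RtoC x)) = 0 /\ - t < Cre (iterf m f (RtoC x)) <= 0.

(* Main.v *)
Require Import Defs.
From Stdlib Require Import Reals.
Open Scope R_scope.
From Stdlib Require Import Lra Lia Psatz Classical.
Require Import Defs.

Open Scope R_scope.

Lemma Cnorm_nonneg z : 0 <= Cnorm z.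
Proof. apply sqrt_pos. Qed.

Lemma Cnorm_RtoC y : Cnorm (RtoC y) = Rabs y.
Proof. unfold Cnorm, RtoC; simpl. replace (y*y+0*0) with (Rsqr y) by (unfold Rsqr; ring).
  apply sqrt_Rsqr_abs. Qed.

Lemma Cnorm_mul z w : Cnorm (Cmul z w) = Cnorm z * Cnorm w.
Proof. destruct z as [x1 y1], w as [x2 y2]; unfold Cnorm, Cmul; simpl.
  rewrite <- sqrt_mult by nra. f_equal; ring. Qed.

Lemma Cre_le z : Rabs (fst z) <= Cnorm z.
Proof. destruct z as [x y]; unfold Cnorm; simpl.
  rewrite <- sqrt_Rsqr_abs. apply sqrt_le_1_alt. unfold Rsqr; nra. Qed.

Lemma Cim_le z : Rabs (snd z) <= Cnorm z.
Proof. destruct z as [x y]; unfold Cnorm; simpl.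
  rewrite <- sqrt_Rsqr_abs. apply sqrt_le_1_alt. unfold Rsqr; nra. Qed.

Lemma Cnorm_triangle z w : Cnorm (Cadd z w) <= Cnorm z + Cnorm w.
Proof. destruct z as [x1 y1], w as [x2 y2]; unfold Cnorm, Cadd; simpl.
  set (A := x1*x1+y1*y1). set (B := x2*x2+y2*y2).
  assert (hA : 0 <= A) by (unfold A; nra). assert (hB : 0 <= B) by (unfold B; nra).
  pose proof (sqrt_pos A) as sA. pose proof (sqrt_pos B) as sB.
  pose proof (sqrt_sqrt A hA) as eA. pose proof (sqrt_sqrt B hB) as eB.
  assert (CS : (x1*x2+y1*y2)*(x1*x2+y1*y2) <= A*B) by (unfold A, B; pose proof (Rle_0_sqr (x1*y2-x2*y1)); unfold Rsqr in *; nra).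
  assert (T : x1*x2+y1*y2 <= sqrt A * sqrt B).
  { destruct (Rle_dec (x1*x2+y1*y2) (sqrt A * sqrt B)) as [h|h]; auto.
    exfalso. apply Rnot_le_lt in h. assert (h0 : 0 <= sqrt A * sqrt B) by (apply Rmult_le_pos; auto).
    assert (h1 : sqrt A * sqrt B * (sqrt A * sqrt B) < (x1*x2+y1*y2)*(x1*x2+y1*y2))
      by (apply Rmult_le_0_lt_compat; lra).
    replace (sqrt A * sqrt B * (sqrt A * sqrt B)) with ((sqrt A * sqrt A) * (sqrt B * sqrt B)) in h1 by ring.
    rewrite eA, eB in h1. lra. }
  rewrite <- (sqrt_square (sqrt A + sqrt B)) by lra.
  apply sqrt_le_1_alt. unfold A, B in *. nra. Qed.

Lemma Cnorm_sub_sym z w : Cnorm (Csub z w) = Cnorm (Csub w z).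
Proof. destruct z, w; unfold Cnorm, Csub; simpl. f_equal; ring. Qed.

Lemma Cnorm_rev z w : Rabs (Cnorm z - Cnorm w) <= Cnorm (Csub z w).
Proof.
  assert (H1 : Cnorm z <= Cnorm w + Cnorm (Csub z w)).
  { replace z with (Cadd w (Csub z w)) at 1 by (destruct z, w; unfold Cadd, Csub; simpl; f_equal; ring).
    apply Cnorm_triangle. }
  assert (H2 : Cnorm w <= Cnorm z + Cnorm (Csub z w)).
  { rewrite Cnorm_sub_sym.
    replace w with (Cadd z (Csub w z)) at 1 by (destruct z, w; unfold Cadd, Csub; simpl; f_equal; ring).
    apply Cnorm_triangle. }
  apply Rabs_le; lra. Qed.

Lemma Cnorm_C1 : Cnorm C1 = 1.
Proof. unfold Cnorm, C1; simpl. replace (1*1+0*0) with 1 by ring. apply sqrt_1. Qed.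

Lemma Cnorm_pow z k : Cnorm (Cpow z k) = Cnorm z ^ k.
Proof. induction k; simpl. apply Cnorm_C1. rewrite Cnorm_mul, IHk; ring. Qed.

Lemma Cnorm_prod N F : Cnorm (Cprod N F) = Rprod N (fun n => Cnorm (F n)).
Proof. induction N; simpl. apply Cnorm_C1. rewrite Cnorm_mul, IHN; ring. Qed.

Lemma Cnorm_divr z a : 0 < a -> Cnorm (Cdivr z a) = Cnorm z / a.
Proof. intro ha. destruct z as [x y]; unfold Cnorm, Cdivr; simpl.
  replace (x / a * (x / a) + y / a * (y / a)) with ((x*x+y*y) * (/a * /a)) by (field; lra).
  rewrite sqrt_mult by (try nra; assert (0 < /a) by (apply Rinv_0_lt_compat; lra); nra).
  rewrite sqrt_square by (left; apply Rinv_0_lt_compat; lra). unfold Rdiv; ring. Qed.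

Lemma Cnorm_1plus z a : 0 < a -> Cnorm (Cadd C1 (Cdivr z a)) <= 1 + Cnorm z / a.
Proof. intro ha. eapply Rle_trans. apply Cnorm_triangle. rewrite Cnorm_C1, Cnorm_divr; lra. Qed.

Lemma Ccv_norm u l : Ccv u l -> Un_cv (fun K => Cnorm (u K)) (Cnorm l).
Proof. intros H eps he. destruct (H eps he) as [N HN]. exists N. intros n hn.
  unfold R_dist. eapply Rle_lt_trans. apply Cnorm_rev. apply HN; lia. Qed.

Lemma Ccv_real y l : Ccv (fun K => RtoC (y K)) l -> snd l = 0 /\ Un_cv y (fst l).
Proof. intros H. split.
  - destruct (Req_dec (snd l) 0) as [e|ne]; auto. exfalso.
    assert (hp : 0 < Rabs (snd l)) by (apply Rabs_pos_lt; auto).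
    destruct (H _ hp) as [N HN]. specialize (HN N (le_n N)).
    cbv beta in HN. pose proof (Cim_le (Csub (RtoC (y N)) l)) as C.
    assert (E: snd (Csub (RtoC (y N)) l) = - snd l) by (unfold Csub, RtoC; simpl; ring).
    rewrite E, Rabs_Ropp in C. lra.
  - intros eps he. destruct (H eps he) as [N HN]. exists N. intros n hn.
    specialize (HN n hn). cbv beta in HN. pose proof (Cre_le (Csub (RtoC (y n)) l)) as C.
    assert (E: fst (Csub (RtoC (y n)) l) = y n - fst l) by (unfold Csub, RtoC; simpl; ring).
    rewrite E in C. unfold R_dist. lra. Qed.

Definition Fr (a : nat -> R) (p : nat -> nat) (K : nat) (y : R) : R :=
  y ^ 3 * Rprod K (fun n => (1 + y / a n) ^ (2 * p n)).

Lemma RtoC_mul u v : Cmul (RtoC u) (RtoC v) = RtoC (u * v).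
Proof. unfold Cmul, RtoC; simpl; f_equal; ring. Qed.

Lemma RtoC_pow y k : Cpow (RtoC y) k = RtoC (y ^ k).
Proof. induction k; simpl. reflexivity. rewrite IHk, RtoC_mul; f_equal; ring. Qed.

Lemma Cprod_ext N F G : (forall n, F n = G n) -> Cprod N F = Cprod N G.
Proof. intro H; induction N; simpl; auto. rewrite IHN, H; auto. Qed.

Lemma RtoC_prod N h : Cprod N (fun n => RtoC (h n)) = RtoC (Rprod N h).
Proof. induction N; simpl. reflexivity. rewrite IHN, RtoC_mul; reflexivity. Qed.

Lemma fpart_real a p K y : fpart a p K (RtoC y) = RtoC (Fr a p K y).
Proof. unfold fpart, Fr. rewrite RtoC_pow, <- RtoC_mul, <- RtoC_prod. f_equal.
  apply Cprod_ext. intro n. rewrite <- RtoC_pow. f_equal.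
  unfold Cadd, C1, Cdivr, RtoC; simpl. f_equal; unfold Rdiv; ring. Qed.

Lemma Rprod_mono N F G : (forall n, 0 <= F n <= G n) -> 0 <= Rprod N F <= Rprod N G.
Proof. intro H; induction N; simpl. lra. destruct (H N). destruct IHN.
  split. apply Rmult_le_pos; lra. apply Rmult_le_compat; lra. Qed.

Lemma Rprod_ge1 N F : (forall n, 1 <= F n) -> 1 <= Rprod N F.
Proof. intro H; induction N; simpl. lra. specialize (H N). nra. Qed.

Lemma Rprod_one N : Rprod N (fun _ => 1) = 1.
Proof. induction N; simpl; auto. rewrite IHN; ring. Qed.

Lemma Rprod_ext N F G : (forall n, F n = G n) -> Rprod N F = Rprod N G.
Proof. intro H; induction N; simpl; auto. rewrite IHN, H; auto. Qed.

Lemma Rprod_S N F : Rprod (S N) F = Rprod N F * F N.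
Proof. reflexivity. Qed.

Lemma Un_cv_const c : Un_cv (fun _ => c) c.
Proof. intros eps he. exists O. intros. unfold R_dist. rewrite Rminus_diag, Rabs_R0. lra. Qed.

Lemma a_ge0 (a : nat -> R) : (forall n, a n < a (S n)) -> forall n, a 0%nat <= a n.
Proof. intros H n; induction n. lra. specialize (H n). lra. Qed.

Lemma div_nonneg r b : 0 <= r -> 0 < b -> 0 <= r / b.
Proof. intros. unfold Rdiv. apply Rmult_le_pos. lra. left; apply Rinv_0_lt_compat; lra. Qed.

Lemma div_lt1 r b : r < b -> 0 < b -> r / b < 1.
Proof. intros. apply (Rmult_lt_reg_r b); auto. unfold Rdiv. rewrite Rmult_assoc, Rinv_l by lra. lra. Qed.

Lemma div_ge1 r b : b <= r -> 0 < b -> 1 <= r / b.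
Proof. intros. apply (Rmult_le_reg_r b); auto. unfold Rdiv. rewrite Rmult_assoc, Rinv_l by lra. lra. Qed.

Lemma pow2p_nonneg x m : 0 <= x ^ (2 * m).
Proof. rewrite pow_mult. apply pow_le. nra. Qed.

Lemma Fr_neg_bound a p (ha_pos : forall n, 0 < a n) (ha_inc : forall n, a n < a (S n)) K y :
  y <= 0 -> 0 <= - Fr a p K y <= gpart a p K (- y).
Proof. intro hy. set (r := - y). assert (hr : 0 <= r) by (unfold r; lra).
  unfold Fr. replace (- (y ^ 3 * Rprod K (fun n => (1 + y / a n) ^ (2 * p n))))
    with (r ^ 3 * Rprod K (fun n => (1 + y / a n) ^ (2 * p n))) by (unfold r; ring).
  assert (h3 : 0 <= r ^ 3) by (apply pow_le; lra).
  assert (fac : forall n, 0 <= (1 + y / a n) ^ (2 * p n) <= (if Rle_dec (a n) r then (1 + r / a n) ^ (2 * p n) else 1)).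
  { intro n. split. apply pow2p_nonneg. pose proof (div_nonneg r (a n) hr (ha_pos n)) as ht.
    replace (y / a n) with (- (r / a n)) by (unfold r, Rdiv; ring).
    rewrite !pow_mult. destruct (Rle_dec (a n) r).
    - apply pow_incr. simpl. set (t := r / a n) in *. clearbody t. clear - ht. split; [pose proof (Rle_0_sqr (1 + - t)); unfold Rsqr in *; nra | nra].
    - apply Rle_trans with (1 ^ p n); [|rewrite pow1; lra]. apply pow_incr. pose proof (div_lt1 r (a n) ltac:(lra) (ha_pos n)) as H. simpl. set (t := r / a n) in *. clearbody t. clear - ht H. split; [pose proof (Rle_0_sqr (1 + - t)); unfold Rsqr in *; nra | nra]. }
  unfold gpart. destruct (Rlt_dec r (a 0%nat)) as [hl|hl].
  - assert (fac' : forall n, 0 <= (1 + y / a n) ^ (2 * p n) <= 1).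
    { intro n. specialize (fac n). destruct (Rle_dec (a n) r) as [h|h]; auto.
      pose proof (a_ge0 a ha_inc n). lra. }
    pose proof (Rprod_mono K _ _ fac') as [P1 P2]. rewrite Rprod_one in P2.
    split. apply Rmult_le_pos; auto. rewrite <- (Rmult_1_r (r^3)) at 2. apply Rmult_le_compat_l; auto.
  - pose proof (Rprod_mono K _ _ fac) as [P1 P2].
    split. apply Rmult_le_pos; auto. apply Rmult_le_compat_l; auto. Qed.

Lemma fac_ge1 r b m : 0 <= r -> 0 < b -> 1 <= (1 + r / b) ^ m.
Proof. intros. apply pow_R1_Rle. pose proof (div_nonneg r b H H0). lra. Qed.

Lemma gfac_bounds (b r : R) (k : nat) : 0 <= r -> 0 < b ->
  1 <= (if Rle_dec b r then (1 + r / b) ^ k else 1) <= (1 + r / b) ^ k.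
Proof. intros hr hb. pose proof (fac_ge1 r b k hr hb). destruct (Rle_dec b r); lra. Qed.

Lemma gfac_mono (b s r : R) (k : nat) : 0 <= s <= r -> 0 < b ->
  (if Rle_dec b s then (1 + s / b) ^ k else 1) <= (if Rle_dec b r then (1 + r / b) ^ k else 1).
Proof. intros [hs hsr] hb. destruct (Rle_dec b s); destruct (Rle_dec b r).
  - apply pow_incr. pose proof (div_nonneg s b hs hb).
    split. lra. apply Rplus_le_compat_l. unfold Rdiv. apply Rmult_le_compat_r; auto.
    left; apply Rinv_0_lt_compat; auto.
  - lra.
  - apply fac_ge1; auto; lra.
  - lra. Qed.

Lemma Fr_pos_bound a p (ha_pos : forall n, 0 < a n) K r : 0 <= r ->
  gpart a p K r <= Fr a p K r /\ Fr a p K r <= Fr a p (S K) r /\ 0 <= Fr a p K r /\ r ^ 3 <= Fr a p K r.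
Proof. intro hr. assert (h3 : 0 <= r ^ 3) by (apply pow_le; lra).
  assert (P1 : 1 <= Rprod K (fun n => (1 + r / a n) ^ (2 * p n))) by (apply Rprod_ge1; intro; apply fac_ge1; auto).
  unfold Fr, gpart. rewrite Rprod_S. split; [|split; [|split]].
  - destruct (Rlt_dec r (a 0%nat)).
    + rewrite <- (Rmult_1_r (r^3)) at 1. apply Rmult_le_compat_l; auto.
    + apply Rmult_le_compat_l; auto. apply Rprod_mono. intro m. cbv beta.
      pose proof (gfac_bounds (a m) r (2 * p m) hr (ha_pos m)); lra.
  - pose proof (fac_ge1 r (a K) (2 * p K) hr (ha_pos K)). rewrite <- Rmult_assoc.
    rewrite <- (Rmult_1_r (r ^ 3 * _)) at 1. apply Rmult_le_compat_l; auto. nra.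
  - nra.
  - nra. Qed.

Lemma gpart_ge a p (ha_pos : forall n, 0 < a n) K r : 0 <= r -> r ^ 3 <= gpart a p K r.
Proof. intro hr. assert (h3 : 0 <= r ^ 3) by (apply pow_le; lra). unfold gpart.
  destruct (Rlt_dec r (a 0%nat)) as [hl|hl]. lra. rewrite <- (Rmult_1_r (r^3)) at 1. apply Rmult_le_compat_l; auto.
  apply Rprod_ge1. intro n. destruct (Rle_dec (a n) r). apply fac_ge1; auto. lra. Qed.

Lemma gpart_mono a p (ha_pos : forall n, 0 < a n) (ha_inc : forall n, a n < a (S n)) K s r :
  0 <= s <= r -> gpart a p K s <= gpart a p K r.
Proof. intros [hs hsr]. assert (h3 : 0 <= s ^ 3) by (apply pow_le; lra).
  assert (h33 : s ^ 3 <= r ^ 3) by (apply pow_incr; lra).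
  assert (G1 : forall t, 0 <= t -> 1 <= Rprod K (fun n => if Rle_dec (a n) t then (1 + t / a n) ^ (2 * p n) else 1)).
  { intros t ht. apply Rprod_ge1. intro n. destruct (Rle_dec (a n) t). apply fac_ge1; auto. lra. }
  unfold gpart. destruct (Rlt_dec s (a 0%nat)) as [h1|h1]; destruct (Rlt_dec r (a 0%nat)) as [h2|h2].
  - auto.
  - pose proof (G1 r ltac:(lra)). rewrite <- (Rmult_1_r (s^3)). apply Rmult_le_compat; lra.
  - lra.
  - apply Rmult_le_compat; auto. pose proof (G1 s hs); lra.
    apply Rprod_mono. intro n. cbv beta. pose proof (gfac_bounds (a n) s (2 * p n) hs (ha_pos n)).
    pose proof (gfac_mono (a n) s r (2 * p n) (conj hs hsr) (ha_pos n)). lra. Qed.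

Lemma Fr_norm a p (ha_pos : forall n, 0 < a n) K z : Cnorm (fpart a p K z) <= Fr a p K (Cnorm z).
Proof. unfold fpart, Fr. rewrite Cnorm_mul, Cnorm_pow, Cnorm_prod.
  apply Rmult_le_compat_l. apply pow_le, Cnorm_nonneg.
  apply Rprod_mono. intro n. rewrite Cnorm_pow. split. apply pow_le, Cnorm_nonneg.
  apply pow_incr. split. apply Cnorm_nonneg. apply Cnorm_1plus; auto. Qed.

Lemma Un_cv_pow v L k : Un_cv v L -> Un_cv (fun n => v n ^ k) (L ^ k).
Proof. intro H. induction k. simpl. apply Un_cv_const.
  exact (CV_mult v (fun n => v n ^ k) L (L ^ k) H IHk). Qed.

Lemma Fr_cont a p K v L : Un_cv v L -> Un_cv (fun n => Fr a p K (v n)) (Fr a p K L).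
Proof. intro H. unfold Fr. apply (CV_mult (fun n => v n ^ 3)). apply Un_cv_pow; auto.
  induction K. exact (Un_cv_const 1).
  simpl. apply (CV_mult (fun n => Rprod K (fun m => (1 + v n / a m) ^ (2 * p m)))). auto.
  apply (Un_cv_pow (fun n => 1 + v n / a K)). apply (CV_plus (fun _ => 1)). apply Un_cv_const.
  apply (CV_mult v (fun _ => / a K)); auto. apply Un_cv_const. Qed.

Lemma iterf_add {A : Type} (h : A -> A) t s y : iterf (t + s) h y = iterf t h (iterf s h y).
Proof. induction t; simpl; auto. rewrite IHt; auto. Qed.

Lemma Nsum_ge (N : nat -> nat) : (forall k, (1 <= k)%nat -> (1 <= N k)%nat) -> forall K, (K <= Nsum N K)%nat.
Proof. intros H K; induction K; simpl. lia. specialize (H (S K)). lia. Qed.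

Theorem lemma3p1
  (a : nat -> R) (p : nat -> nat) (f : Cx -> Cx) (g : R -> R) (M : R -> R)
  (N : nat -> nat)
  (ha_pos : forall n, 0 < a n)
  (ha_inc : forall n, a n < a (S n))
  (hp : forall n, (1 <= p n)%nat)
  (hf : forall z, Ccv (fun K => fpart a p K z) (f z))
  (hg : forall r, 0 <= r -> Un_cv (fun K => gpart a p K r) (g r))
  (hM : is_max_modulus f M)
  (hN : forall k, (1 <= k)%nat -> (1 <= N k)%nat)
  (h1 : maps_into f (N 1%nat) (iterf 2 g 10) (iterf (N 1%nat) g 10))
  (hk : forall k, (2 <= k)%nat ->
          maps_into f (N k) (iterf (Nsum N (k - 1) + 2 * k) g 10)
                            (iterf (Nsum N k) g 10)) :
  forall R0, 0 < R0 -> (forall r, R0 <= r -> r < M r) ->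
  forall x, x <= 0 -> ~ in_A f M R0 (RtoC x).
Proof.
  intros R0 hR0 hMR x hx [m [hm HA]].
  set (Ff := fun y => fst (f (RtoC y))).
  assert (f_real : forall y, f (RtoC y) = RtoC (Ff y) /\ Un_cv (fun K => Fr a p K y) (Ff y)).
  { intro y. assert (C : Ccv (fun K => RtoC (Fr a p K y)) (f (RtoC y))).
    { intros eps he. destruct (hf (RtoC y) eps he) as [K0 HK]. exists K0. intros n hn.
      rewrite <- fpart_real. apply HK; auto. }
    destruct (Ccv_real _ _ C) as [e1 e2]. split; auto.
    unfold Ff. change (RtoC (fst (f (RtoC y)))) with (fst (f (RtoC y)), 0). rewrite <- e1. apply surjective_pairing. }
  assert (Ff_neg : forall y, y <= 0 -> Ff y <= 0 /\ - Ff y <= g (- y)).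
  { intros y hy. destruct (f_real y) as [_ cv].
    pose proof (CV_opp _ _ cv) as cv'. unfold opp_seq in cv'. split.
    - assert (0 <= - Ff y); [|lra].
      apply (@Rle_cv_lim (fun _ => 0) (fun n => - Fr a p n y)); auto.
      intro n. apply (Fr_neg_bound a p ha_pos ha_inc n y hy). apply Un_cv_const.
    - apply (@Rle_cv_lim (fun n => - Fr a p n y) (fun n => gpart a p n (- y))); auto.
      intro n. apply (Fr_neg_bound a p ha_pos ha_inc n y hy). apply hg. lra. }
  assert (Ff_pos : forall r, 0 <= r -> g r <= Ff r /\ forall K, Fr a p K r <= Ff r).
  { intros r hr. destruct (f_real r) as [_ cv]. split.
    - apply (@Rle_cv_lim (fun n => gpart a p n r) (fun n => Fr a p n r)); auto.
      intro n. apply (Fr_pos_bound a p ha_pos n r hr).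
    - apply growing_ineq; auto. intro n. apply (Fr_pos_bound a p ha_pos n r hr). }
  assert (g_ge : forall r, 0 <= r -> r ^ 3 <= g r).
  { intros r hr. apply (@Rle_cv_lim (fun _ => r ^ 3) (fun n => gpart a p n r)); auto.
    intro n. apply gpart_ge; auto. apply Un_cv_const. }
  assert (g_mono : forall s r, 0 <= s <= r -> g s <= g r).
  { intros s r hsr. apply (@Rle_cv_lim (fun n => gpart a p n s) (fun n => gpart a p n r)); try apply hg; try lra.
    intro n. apply gpart_mono; auto. }
  assert (M_ge : forall s, 0 <= s -> Ff s <= M s).
  { intros s hs. destruct (hM s hs) as [_ H2]. specialize (H2 (RtoC s)).
    rewrite Cnorm_RtoC, Rabs_pos_eq in H2 by lra. specialize (H2 eq_refl).
    destruct (f_real s) as [e _]. rewrite e, Cnorm_RtoC in H2. pose proof (Rle_abs (Ff s)). lra. }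
  assert (M_le : forall s, 0 <= s -> M s <= Ff s).
  { intros s hs. destruct (hM s hs) as [[z [hz1 hz2]] _]. rewrite <- hz2.
    apply (@Rle_cv_lim (fun K => Cnorm (fpart a p K z)) (fun K => Fr a p K s)).
    intro K. rewrite <- hz1. apply Fr_norm; auto. apply Ccv_norm, hf. apply f_real. }
  set (rr := fun n => iterf n g 10).
  assert (rr_S : forall n, 10 <= rr n /\ rr n + 1 <= rr (S n)).
  { induction n.
    - unfold rr; simpl. pose proof (g_ge 10 ltac:(lra)). simpl in H. lra.
    - destruct IHn as [A B]. assert (10 <= rr (S n)) by lra. split; auto.
      change (rr (S (S n))) with (g (rr (S n))). pose proof (g_ge (rr (S n)) ltac:(lra)).
      simpl in H0. nra. }
  assert (rr_lt : forall i j, (i < j)%nat -> rr i < rr j).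
  { intros i j hij. induction hij. pose proof (rr_S i); lra. pose proof (rr_S m0); lra. }
  assert (rr_le : forall i j, (i <= j)%nat -> rr i <= rr j).
  { intros i j hij. destruct (Nat.eq_dec i j). subst; lra. left; apply rr_lt; lia. }
  assert (rr_nat : forall n, INR n <= rr n).
  { induction n. simpl. pose proof (rr_S 0%nat); lra. rewrite S_INR. pose proof (rr_S n); lra. }
  assert (iter_real : forall t y, iterf t f (RtoC y) = RtoC (iterf t Ff y)).
  { induction t; intro y; simpl; auto. rewrite IHt. apply f_real. }
  set (u := fun t => iterf t Ff x).
  assert (u_neg : forall t, u t <= 0).
  { induction t. unfold u; simpl; auto. unfold u; simpl. apply Ff_neg. apply IHt. }
  assert (stage : forall j, (1 <= j)%nat ->
            maps_into f (N j) (rr (Nsum N (j - 1) + 2 * j)%nat) (rr (Nsum N j))).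
  { intros j hj. destruct j as [|[|j]]. lia. exact h1. apply hk. lia. }
  assert (step : forall j T, (1 <= j)%nat -> - u T <= rr (Nsum N (j - 1)) ->
            - u (T + 1 + N j)%nat <= rr (Nsum N j)).
  { intros j T hj hT.
    assert (e1 : u (T + 1)%nat = Ff (u T)) by (replace (T + 1)%nat with (S T) by lia; reflexivity).
    assert (b1 : - u (T + 1)%nat < rr (Nsum N (j - 1) + 2 * j)%nat).
    { rewrite e1. destruct (Ff_neg (u T) (u_neg T)) as [_ B].
      pose proof (g_mono (- u T) (rr (Nsum N (j - 1))) ltac:(pose proof (u_neg T); lra)).
      assert (rr (S (Nsum N (j - 1))) < rr (Nsum N (j - 1) + 2 * j)%nat) by (apply rr_lt; lia).
      change (rr (S (Nsum N (j - 1)))) with (g (rr (Nsum N (j - 1)))) in H0. lra. }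
    destruct (stage j hj (u (T + 1)%nat) ltac:(split; [lra | apply u_neg])) as [_ [B _]].
    rewrite iter_real in B. simpl in B.
    replace (T + 1 + N j)%nat with (N j + (T + 1))%nat by lia. unfold u at 1. rewrite iterf_add.
    fold (u (T + 1)%nat). lra. }
  destruct (INR_unbounded (- x)) as [K HK].
  assert (inv : forall q, exists T, (T + Nsum N K = Nsum N (K + q) + q)%nat /\ - u T <= rr (Nsum N (K + q))).
  { induction q.
    - exists O. rewrite !Nat.add_0_r. split. lia. unfold u; simpl.
      pose proof (rr_le K (Nsum N K) (Nsum_ge N hN K)). pose proof (rr_nat K). lra.
    - destruct IHq as [T [eT bT]]. exists (T + 1 + N (S (K + q)))%nat.
      replace (K + S q)%nat with (S (K + q)) by lia. change (Nsum N (S (K+q))) with (Nsum N (K+q) + N (S (K+q)))%nat. split. lia.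
      apply step. lia. replace (S (K + q) - 1)%nat with (K + q)%nat by lia. auto. }
  set (v := fun n => iterf n M R0).
  assert (v_prop : forall n, R0 <= v n /\ v n < v (S n)).
  { induction n. unfold v; simpl. split. lra. apply hMR; lra.
    destruct IHn. split. lra. apply hMR. lra. }
  assert (reach : exists l, 10 <= v l).
  { destruct (classic (exists l, 10 <= v l)) as [H|H]; auto. exfalso.
    assert (Hb : forall n, v n < 10) by (intro n; apply Rnot_le_lt; intro; apply H; exists n; auto).
    assert (gr : Un_growing v) by (intro n; left; apply v_prop).
    destruct (growing_cv v gr) as [L cvL].
    { exists 10. intros y [i ->]. left; apply Hb. }
    pose proof (growing_ineq v L gr cvL) as vL.
    assert (hL : R0 <= L) by (pose proof (vL O); unfold v in H0; simpl in H0; lra).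
    pose proof (hMR L hL). pose proof (M_le L ltac:(lra)).
    destruct (f_real L) as [_ cvF].
    destruct (cvF (Ff L - L) ltac:(lra)) as [K0 HK0]. specialize (HK0 K0 (le_n K0)).
    unfold R_dist in HK0. apply Rabs_def2 in HK0.
    pose proof (Fr_cont a p K0 v L cvL) as cvK.
    destruct (cvK (Fr a p K0 L - L) ltac:(lra)) as [n0 Hn0]. specialize (Hn0 n0 (le_n n0)).
    unfold R_dist in Hn0. apply Rabs_def2 in Hn0.
    pose proof (vL (S n0)). change (v (S n0)) with (M (v n0)) in H2.
    pose proof (v_prop n0). pose proof (M_ge (v n0) ltac:(lra)).
    pose proof (proj2 (Ff_pos (v n0) ltac:(lra)) K0). lra. }
  destruct reach as [l hl].
  assert (low : forall n, rr n <= v (l + n)%nat).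
  { induction n. rewrite Nat.add_0_r. unfold rr; simpl; auto.
    rewrite Nat.add_succ_r. change (v (S (l + n))) with (M (v (l + n)%nat)).
    change (rr (S n)) with (g (rr n)).
    pose proof (rr_S n). pose proof (M_ge (v (l + n)%nat) ltac:(lra)).
    pose proof (proj1 (Ff_pos (v (l + n)%nat) ltac:(lra))).
    pose proof (g_mono (rr n) (v (l + n)%nat) ltac:(lra)). lra. }
  assert (up : forall n, (1 <= n)%nat -> v n <= - u (n + m)%nat).
  { intros n hn. specialize (HA n hn). rewrite !iter_real, Cnorm_RtoC in HA.
    rewrite <- iterf_add in HA. fold (u (n + m)%nat) in HA.
    rewrite Rabs_left1 in HA by apply u_neg. change (iterf n M R0) with (v n) in HA. lra. }
  destruct (inv (m + l + Nsum N K + 1)%nat) as [T [eT bT]].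
  set (S0 := Nsum N (K + (m + l + Nsum N K + 1))) in *.
  assert (hlt : rr S0 < rr (T - m - l)%nat) by (apply rr_lt; lia).
  pose proof (low (T - m - l)%nat). pose proof (up (T - m)%nat ltac:(lia)).
  replace (l + (T - m - l))%nat with (T - m)%nat in H by lia.
  replace (T - m + m)%nat with T in H0 by lia. lra.
Qed.
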